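(* Let $(G,H)$ be a strictly balanced rooted graph. Then: (i) There is a constant $\beta>0$ such that, for all $p=p(n)\in[0,1]$ with $p=O(n^{-1/d(G,H)+\beta})$, $$n^{\beta}\cdot\max_{G\subsetneq J\subsetneq H} n^{v_H-v_J}p^{e_H-e_J}\to 0 \quad (n\to\infty).$$ (ii) The graph $H-V(G)$, obtained from $H$ by deleting the vertices of $G$, is connected.
   Context: For a graph $F$, $v_F,e_F$ are its numbers of vertices and edges. A rooted graph $(G,H)$ consists of a graph $H$ and an induced subgraph $G\subseteq H$ (the root vertices), with $e_H>e_G$. For $G\subsetneq J\subseteq H$, $d(G,J)=(e_J-e_G)/(v_J-v_G)$. $(G,H)$ is strictly balanced if $d(G,J)<d(G,H)$ for all subgraphs $J$ with $G\subsetneq J\subsetneq H$. *)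

(* Defs.v *)
From mathcomp Require Import all_boot.
From Stdlib Require Import Reals.
Set Implicit Arguments. Unset Strict Implicit. Unset Printing Implicit Defensive.

(* A (finite simple) graph on ambient vertex type T: a vertex set together with
   a set of edges, each edge a 2-element subset of the vertex set. *)
Definition graph (T : finType) : Type := ({set T} * {set {set T}})%type.

Section Graphs.
Variable T : finType.
Implicit Types F G H J : graph T.

Definition verts F : {set T} := F.1.
Definition edges F : {set {set T}} := F.2.
Definition v_ F : nat := #|verts F|.
Definition e_ F : nat := #|edges F|.

Definition is_graph F : bool :=
  [forall x in edges F, (#|x| == 2) && (x \subset verts F)].

Definition subgraph F H : bool :=
  is_graph F && (verts F \subset verts H) && (edges F \subset edges H).

Definition induced_subgraph G H : bool :=
  (verts G \subset verts H) &&
  (edges G == [set x in edges H | x \subset verts G]).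

Definition rooted_graph G H : Prop :=
  is_graph H /\ is_graph G /\ induced_subgraph G H /\ (e_ G < e_ H)%N.

Definition dens G J : R :=
  ((INR (e_ J) - INR (e_ G)) / (INR (v_ J) - INR (v_ G)))%R.

Definition strictly_between G J H : bool :=
  subgraph J H && subgraph G J && (J != G) && (J != H).

Definition strictly_balanced G H : Prop :=
  forall J : graph T, strictly_between G J H -> (dens G J < dens G H)%R.

Definition delete_verts H (S : {set T}) : graph T :=
  (verts H :\: S, [set x in edges H | [disjoint x & S]]).

Definition adj F : rel T :=
  fun x y => (x \in verts F) && (y \in verts F) && ([set x; y] \in edges F).

Definition connected_graph F : Prop :=
  verts F != set0 /\
  forall x y, x \in verts F -> y \in verts F -> connect (adj F) x y.
End Graphs.

Definition bigO (p f : nat -> R) : Prop :=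
  exists C : R, exists N : nat, forall n : nat, (N <= n)%N -> (Rabs (p n) <= C * f n)%R.

(* Main.v *)
Require Import Defs.
From mathcomp Require Import all_boot.
From Stdlib Require Import Reals.
From Stdlib Require Import Lra Psatz ZArith.
Set Implicit Arguments. Unset Strict Implicit.

Section GraphFacts.
Variable T : finType.
Implicit Types G H J F : graph T.

Lemma induced_edges G H : induced_subgraph G H ->
  edges G = [set x in edges H | x \subset verts G].
Proof. by case/andP=> _ /eqP. Qed.

Lemma isg_sub F x : is_graph F -> x \in edges F -> x \subset verts F.
Proof. by move/forallP/(_ x)/implyP => h /h /andP[]. Qed.

Lemma isg_card F x : is_graph F -> x \in edges F -> #|x| = 2.
Proof. by move/forallP/(_ x)/implyP => h /h /andP[/eqP]. Qed.

Lemma sub_card G J : subgraph G J -> (v_ G <= v_ J) && (e_ G <= e_ J).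
Proof. by case/andP=> /andP[_ sV] sE; rewrite !subset_leq_card. Qed.

Lemma vJ_gt G J H : induced_subgraph G H -> subgraph J H -> subgraph G J ->
  J != G -> v_ G < v_ J.
Proof.
move=> iGH /andP[/andP[gJ _] sEH] /andP[/andP[_ sV] sE] neq.
rewrite ltnNge; apply/negP => le.
have eV : verts G = verts J by apply/eqP; rewrite eqEcard sV.
have eE : edges G = edges J.
  apply/eqP; rewrite eqEsubset sE /= (induced_edges iGH).
  apply/subsetP => x xJ; rewrite inE (subsetP sEH _ xJ) /= eV.
  exact: isg_sub gJ xJ.
move/eqP: neq; apply; clear -eV eE.
by case: J eV eE => VJ EJ; case: G => VG EG; rewrite /verts /edges /= => -> ->.
Qed.

Lemma subgraph_refl H : is_graph H -> subgraph H H.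
Proof. by rewrite /subgraph => ->; rewrite !subxx. Qed.

Lemma induced_sub G H : is_graph G -> induced_subgraph G H -> subgraph G H.
Proof.
move=> gG iGH; rewrite /subgraph gG /=; case/andP: (iGH) => -> _ /=.
rewrite (induced_edges iGH); apply/subsetP=> x; rewrite inE; by case/andP.
Qed.

Lemma vH_gt G H : rooted_graph G H -> v_ G < v_ H.
Proof.
case=> gH [gG [iGH lt]]; apply: (vJ_gt iGH (subgraph_refl gH) (induced_sub gG iGH)).
by apply/eqP => e; move: lt; rewrite e ltnn.
Qed.

End GraphFacts.

Lemma frac_lt (a p b q : R) : (0 < p -> 0 < q -> a / p < b / q -> a * q < b * p)%R.
Proof.
move=> hp hq h.
have := Rmult_lt_compat_r (p*q) _ _ (Rmult_lt_0_compat _ _ hp hq) h.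
replace (a / p * (p * q))%R with (a * q)%R by (field; lra).
by replace (b / q * (p * q))%R with (b * p)%R by (field; lra).
Qed.

Lemma INR_subn m n : n <= m -> INR (m - n) = (INR m - INR n)%R.
Proof. move=> h; rewrite -{2}(subnK h) plus_INR; ring. Qed.

Lemma INR_lt_succ (m k : nat) : (INR m < INR k -> INR m + 1 <= INR k)%R.
Proof. move/INR_lt => h; rewrite -S_INR; apply le_INR; exact h. Qed.


Lemma nat_arch (r : R) : exists N : nat, (r < INR N)%R.
Proof.
have [h _] := archimed (Rabs r).
have hp : (0 < up (Rabs r))%Z.
  apply: lt_0_IZR; have := Rabs_pos r; lra.
exists (Z.to_nat (up (Rabs r))).
rewrite INR_IZR_INZ Z2Nat.id; last by apply: Z.lt_le_incl.
have := Rle_abs r; lra.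
Qed.

Lemma rpow_lim (g K eps : R) : (g < 0 -> 0 <= K -> 0 < eps ->
  exists N : nat, forall n : nat, (N <= n)%coq_nat -> K * Rpower (INR n) g < eps)%R.
Proof.
move=> g0 K0 e0.
pose t := (eps / (K + 1))%R.
have t0 : (0 < t)%R by rewrite /t; apply: Rdiv_lt_0_compat; lra.
have [N hN] := nat_arch (exp (ln t / g)).
exists N => n hn.
have hx : (exp (ln t / g) < INR n)%R.
  by apply: (Rlt_le_trans _ (INR N)) => //; apply: le_INR.
have hl : (ln t / g < ln (INR n))%R.
  rewrite -{1}(ln_exp (ln t / g)); apply: ln_increasing => //; exact: exp_pos.
have hr : (Rpower (INR n) g < t)%R.
  rewrite /Rpower -[X in (_ < X)%R](exp_ln t t0); apply: exp_increasing.
  have e : (g * (ln t / g) = ln t)%R by field; lra.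
  nra.
have hp : (0 < Rpower (INR n) g)%R by apply: exp_pos.
have et : (t * (K + 1) = eps)%R by rewrite /t; field; lra.
nra.
Qed.

Lemma bigmax_ub (I : finType) (P : pred I) (F : I -> R) (c B : R) :
  (0 < c)%R -> (0 <= B)%R -> (forall i, P i -> c * F i <= B)%R ->
  (c * \big[Rmax/0%R]_(i | P i) F i <= B)%R.
Proof.
move=> c0 B0 h.
apply: (big_ind (fun x => c * x <= B)%R) => //.
  by rewrite Rmult_0_r.
by move=> u v hu hv; rewrite /Rmax; case: Rle_dec.
Qed.

Lemma bigmax_ge0 (I : finType) (P : pred I) (F : I -> R) :
  (forall i, P i -> 0 <= F i)%R -> (0 <= \big[Rmax/0%R]_(i | P i) F i)%R.
Proof.
move=> h; apply: (big_ind (fun x => 0 <= x)%R) => //; first by apply: Rle_refl.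
by move=> u v hu hv; rewrite /Rmax; case: Rle_dec.
Qed.

Lemma term_bound (x pn C c beta d : R) (a b eH : nat) :
  (1 <= x)%R -> (0 <= pn)%R -> (pn <= C * Rpower x c)%R -> (b <= eH)%coq_nat ->
  (beta + INR a + INR b * c <= - d)%R ->
  (Rpower x beta * (x ^ a * pn ^ b) <= Rmax 1 C ^ eH * Rpower x (-d))%R.
Proof.
move=> x1 p0 pC beH hexp.
have x0 : (0 < x)%R by lra.
have Pp : forall y, (0 < Rpower x y)%R by move=> y; apply: exp_pos.
have Pc := Pp c.
have C0 : (0 <= C)%R by nra.
have h1 : (pn ^ b <= C ^ b * Rpower x (c * INR b))%R.
  rewrite -Rpower_mult (@Rpower_pow _ _ Pc) -Rpow_mult_distr; apply: pow_incr; lra.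
have h2 : (C ^ b <= Rmax 1 C ^ eH)%R.
  apply: (Rle_trans _ (Rmax 1 C ^ b)).
    apply: pow_incr; split; [lra | apply: Rmax_r].
  by apply: Rle_pow; [apply: Rmax_l | ].
rewrite -(@Rpower_pow a _ x0).
apply: (Rle_trans _ (Rpower x beta * (Rpower x (INR a) * (C ^ b * Rpower x (c * INR b))))).
  apply: Rmult_le_compat_l; first by left.
  apply: Rmult_le_compat_l; first by left.
  exact: h1.
replace (Rpower x beta * (Rpower x (INR a) * (C ^ b * Rpower x (c * INR b))))%R
  with (C ^ b * Rpower x (beta + INR a + INR b * c))%R
  by (rewrite !Rpower_plus (Rmult_comm (INR b) c); ring).
apply: Rmult_le_compat.
- by apply: pow_le.
- by left.
- exact: h2.
- by apply: Rle_Rpower.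
Qed.

Lemma expo_real (eG eH eJ vG vH vJ : R) :
  (0 < eH - eG -> 0 < vH - vG -> eJ <= eH -> 0 <= eJ ->
  (vJ - vG) * (eH - eG) - (eJ - eG) * (vH - vG) >= 1 ->
  / (2 * (eH - eG) * (1 + eH)) + (vH - vJ)
   + (eH - eJ) * (- / ((eH - eG) / (vH - vG)) + / (2 * (eH - eG) * (1 + eH)))
  <= - / (2 * (eH - eG)))%R.
Proof.
move=> hE hV hJ hJ0 hint.
have eH0 : (0 <= eH)%R by lra.
have h1 : (/ (2 * (eH - eG) * (1 + eH)) * (1 + (eH - eJ)) <= / (2 * (eH - eG)))%R.
  apply: (Rle_trans _ (/ (2 * (eH - eG) * (1 + eH)) * (1 + eH))).
    apply: Rmult_le_compat_l; last lra.
    left; apply: Rinv_0_lt_compat; nra.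
  right; field; lra.
have h2 : ((vH - vJ) + (eH - eJ) * (- / ((eH - eG) / (vH - vG))) <= - / (eH - eG))%R.
  have -> : ((vH - vJ) + (eH - eJ) * (- / ((eH - eG) / (vH - vG)))
     = ((vH - vJ) * (eH - eG) - (eH - eJ) * (vH - vG)) * / (eH - eG))%R
    by field; lra.
  have hn : ((vH - vJ) * (eH - eG) - (eH - eJ) * (vH - vG) <= -1)%R by nra.
  have -> : (- / (eH - eG) = -1 * / (eH - eG))%R by ring.
  apply: Rmult_le_compat_r => //; left; apply: Rinv_0_lt_compat; lra.
have e3 : (/ (2 * (eH - eG)) - / (eH - eG) = - / (2 * (eH - eG)))%R by field; lra.
lra.
Qed.

Section Main.
Variable T : finType.
Implicit Types G H J F : graph T.

Lemma sb_ineq G J H : rooted_graph G H -> strictly_balanced G H ->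
  strictly_between G J H ->
  ((INR (e_ J) - INR (e_ G)) * (INR (v_ H) - INR (v_ G))
     < (INR (e_ H) - INR (e_ G)) * (INR (v_ J) - INR (v_ G)))%R.
Proof.
move=> rGH sb hJ; have := sb J hJ; rewrite /dens.
case: (rGH) => gH [gG [iGH ltE]].
case/andP: hJ => /andP[/andP[sJH sGJ] nG] nH.
have vJ := vJ_gt iGH sJH sGJ nG.
have vH := vH_gt rGH.
have pJ : (0 < INR (v_ J) - INR (v_ G))%R by have := lt_INR _ _ (ltP vJ); lra.
have pH : (0 < INR (v_ H) - INR (v_ G))%R by have := lt_INR _ _ (ltP vH); lra.
exact: frac_lt.
Qed.

Lemma part2 G H : rooted_graph G H -> strictly_balanced G H ->
  connected_graph (delete_verts H (verts G)).
Proof.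
move=> rGH sb; have vGH := vH_gt rGH; case: (rGH) => gH [gG [iGH ltE]].
set F := delete_verts H (verts G).
have vF : verts F = verts H :\: verts G by [].
have eF : edges F = [set x in edges H | [disjoint x & verts G]] by [].
have sGH : verts G \subset verts H by case/andP: iGH.
split.
  rewrite vF setD_eq0; apply/negP => s; have := subset_leq_card s.
  by move: vGH; rewrite /v_ ltnNge => /negP.
move=> x y xF yF.
case cxy: (connect (adj F) x y) => //; move/negbT: cxy => nxy; exfalso.
pose A := [set z in verts F | connect (adj F) x z].
pose B := verts F :\: A.
have JS : forall S : {set T}, S \subset verts F -> forall u w, u \in S -> w \in verts F ->
    w \notin S ->
    strictly_between G (verts G :|: S, [set e in edges H | e \subset verts G :|: S]) H.
  move=> S sS u w uS wF wS.
  have sSH : S \subset verts H by apply: (subset_trans sS); rewrite vF subsetDl.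
  have uG : u \notin verts G by move: (subsetP sS u uS); rewrite vF !inE => /andP[].
  move: (wF); rewrite vF !inE => /andP[wG wH].
  apply/andP; split; [apply/andP; split; [apply/andP; split|] |].
  - rewrite /subgraph; apply/andP; split; [apply/andP; split|].
    + apply/forallP => e; apply/implyP; rewrite /edges /verts /= inE => /andP[eH se].
      by rewrite se andbT (isg_card gH eH).
    + by rewrite /verts /= subUset sGH sSH.
    + by apply/subsetP => e; rewrite /edges /= inE => /andP[].
  - rewrite /subgraph gG /verts /edges /= subsetUl /=.
    rewrite -/(edges G) (induced_edges iGH); apply/subsetP=> e; rewrite !inE.
    case/andP=> -> s /=; exact: (subset_trans s (subsetUl _ _)).
  - apply/eqP => h.
    have : u \in verts (verts G :|: S, [set e in edges H | e \subset verts G :|: S]).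
      by rewrite /verts /= inE uS orbT.
    by rewrite h (negbTE uG).
  - apply/eqP => h.
    have : w \in verts H by [].
    by rewrite -h /verts /= inE (negbTE wG) (negbTE wS).
have xA : x \in A by rewrite inE xF connect0.
have yA : y \notin A by rewrite inE yF /= nxy.
have sA : A \subset verts F by apply/subsetP => z; rewrite inE => /andP[].
have sB : B \subset verts F by apply: subsetDl.
have yB : y \in B by rewrite inE yA yF.
have xB : x \notin B by rewrite inE xA.
have J1 := JS A sA x y xA yF yA.
have J2 := JS B sB y x yB xF xB.
have edgeAB : forall e, e \in edges H ->
    (e \subset verts G :|: A) || (e \subset verts G :|: B).
  move=> e eH; case X: (e \subset verts G :|: A) => //=.
  have seH := isg_sub gH eH.
  move/negbT/subsetPn: X => [w we wn].
  have wH := subsetP seH w we.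
  move: wn; rewrite !inE negb_or => /andP[wG wA].
  have wF : w \in verts F by rewrite vF !inE wG wH.
  move: wA; rewrite wG wH /= => wA.
  apply/subsetP => u ue; rewrite !inE.
  case uG: (u \in verts G) => //=.
  have uF : u \in verts F by rewrite vF !inE uG (subsetP seH u ue).
  rewrite (subsetP seH u ue) /= !andbT; apply/negP => cxu.
  have uw : u != w by apply/eqP => euw; rewrite -euw cxu in wA.
  have ee : e = [set u; w].
    apply/esym/eqP; rewrite eqEcard cards2 uw (isg_card gH eH) /= andbT.
    by apply/subsetP => z; rewrite !inE => /orP[] /eqP ->.
  have eFe : [set u; w] \in edges F.
    rewrite eF inE -ee eH /= ee disjoint_subset.
    by apply/subsetP => z; rewrite !inE => /orP[] /eqP ->; rewrite ?uG.
  have auw : adj F u w by rewrite /adj uF wF eFe.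
  by move: wA; rewrite (connect_trans cxu (connect1 auw)).
have hIv : (verts G :|: A) :&: (verts G :|: B) = verts G.
  apply/setP => z; rewrite !inE.
  by case: (z \in verts G); case: (z \in verts H); case: (connect (adj F) x z).
have hUv : (verts G :|: A) :|: (verts G :|: B) = verts H.
  apply/setP => z; rewrite !inE.
  case zG: (z \in verts G) => /=; first by rewrite (subsetP sGH).
  by case: (z \in verts H); case: (connect (adj F) x z).
have hIe : [set e in edges H | e \subset verts G :|: A] :&:
           [set e in edges H | e \subset verts G :|: B] = edges G.
  apply/setP => e; rewrite (induced_edges iGH) !inE.
  have -> : (e \subset verts G) = (e \subset verts G :|: A) && (e \subset verts G :|: B)
    by rewrite -subsetI hIv.
  by case: (e \in edges H).
have hUe : [set e in edges H | e \subset verts G :|: A] :|: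
           [set e in edges H | e \subset verts G :|: B] = edges H.
  apply/setP => e; rewrite !inE.
  case eH: (e \in edges H) => //=; exact: edgeAB.
have h1 := sb_ineq rGH sb J1.
have h2 := sb_ineq rGH sb J2.
move: h1 h2; rewrite {1 2}/v_ {1 2}/e_ /verts /edges /=.
rewrite -/(verts G) -/(edges G) -/(verts H) -/(edges H).
have hv := cardsUI (verts G :|: A) (verts G :|: B).
have he := cardsUI [set e in edges H | e \subset verts G :|: A]
                   [set e in edges H | e \subset verts G :|: B].
rewrite hUv hIv in hv; rewrite hUe hIe in he.
move/(f_equal INR): hv; move/(f_equal INR): he; rewrite !plus_INR.
rewrite /v_ /e_.
move=> he hv h1 h2; rewrite /verts /edges /= in he hv h1 h2; nra.
Qed.

End Main.

Lemma expo_graph (T : finType) (G H J : graph T) : rooted_graph G H -> strictly_balanced G H ->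
  strictly_between G J H ->
  (/ (2 * (INR (e_ H) - INR (e_ G)) * (1 + INR (e_ H))) + INR (v_ H - v_ J)
   + INR (e_ H - e_ J) * (- / dens G H + / (2 * (INR (e_ H) - INR (e_ G)) * (1 + INR (e_ H))))
  <= - / (2 * (INR (e_ H) - INR (e_ G))))%R.
Proof.
move=> rGH sb hJ.
have hi := sb_ineq rGH sb hJ.
have vH := vH_gt rGH.
case: (rGH) => gH [gG [iGH ltE]].
case/andP: (hJ) => /andP[/andP[sJH sGJ] _] _.
case/andP: (sub_card sJH) => vJH eJH.
case/andP: (sub_card sGJ) => vGJ eGJ.
rewrite !INR_subn // /dens.
have hint := @INR_lt_succ (e_ J * v_ H + e_ H * v_ G + e_ G * v_ J)%coq_nat
                         (e_ H * v_ J + e_ J * v_ G + e_ G * v_ H)%coq_nat.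
rewrite !plus_INR !mult_INR in hint.
have pE : (0 < INR (e_ H) - INR (e_ G))%R by have := lt_INR _ _ (ltP ltE); lra.
have pV : (0 < INR (v_ H) - INR (v_ G))%R by have := lt_INR _ _ (ltP vH); lra.
apply: expo_real => //.
- by apply: le_INR; apply/leP.
- exact: pos_INR.
- have := hint ltac:(nra); nra.
Qed.

Unset Implicit Arguments.

Theorem lemma11 (T : finType) (G H : graph T) :
  rooted_graph G H -> strictly_balanced G H ->
  (exists beta : R, (0 < beta)%R /\
     forall p : nat -> R,
       (forall n, (0 <= p n <= 1)%R) ->
       bigO p (fun n => Rpower (INR n) (- / dens G H + beta)%R) ->
       Un_cv (fun n : nat =>
                (Rpower (INR n) beta *
                 \big[Rmax/0%R]_(J : graph T | strictly_between G J H)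
                    (INR n ^ (v_ H - v_ J) * p n ^ (e_ H - e_ J)))%R) 0%R)
  /\ connected_graph (delete_verts H (verts G)).
Proof.
move=> rGH sb; split; last exact: part2.
case: (rGH) => gH [gG [iGH ltE]].
have pE : (0 < INR (e_ H) - INR (e_ G))%R by have := lt_INR _ _ (ltP ltE); lra.
have eH0 := pos_INR (e_ H).
exists (/ (2 * (INR (e_ H) - INR (e_ G)) * (1 + INR (e_ H))))%R; split.
  apply: Rinv_0_lt_compat; nra.
move=> p hp [C [N0 hb]] eps ep.
set beta := (/ (2 * (INR (e_ H) - INR (e_ G)) * (1 + INR (e_ H))))%R.
set delta := (/ (2 * (INR (e_ H) - INR (e_ G))))%R.
have d0 : (0 < delta)%R by apply: Rinv_0_lt_compat; lra.
have K0 : (0 <= Rmax 1 C ^ e_ H)%R.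
  apply: pow_le; have := Rmax_l 1 C; lra.
have [N1 hN1] := rpow_lim (g := (- delta)%R) ltac:(lra) K0 ep.
exists (Nat.max (Nat.max N0 1) N1) => n hn.
have n1 : (1 <= INR n)%R by apply: (le_INR 1); lia.
have hN0 : N0 <= n by apply/leP; lia.
rewrite /R_dist Rminus_0_r Rabs_pos_eq; last first.
  apply: Rmult_le_pos; first by left; apply: exp_pos.
  apply: bigmax_ge0 => J _; apply: Rmult_le_pos; apply: pow_le.
    exact: pos_INR.
  by case: (hp n).
apply: (Rle_lt_trans _ (Rmax 1 C ^ e_ H * Rpower (INR n) (- delta))); last first.
  apply: hN1; lia.
apply: bigmax_ub.
- exact: exp_pos.
- apply: Rmult_le_pos => //; left; apply: exp_pos.
move=> J hJ.
apply: (term_bound (c := (- / dens G H + beta)%R)).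
- exact: n1.
- by case: (hp n).
- by have := hb n hN0; rewrite Rabs_pos_eq //; case: (hp n).
- by apply/leP; apply: leq_subr.
- exact: expo_graph.
Qed.
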